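(* For each combinatorial line $L$ of $\mathrm{HJ}(d,n)$, there is an affine function $g_L:\mathbb{R}^5\to\mathbb{R}$ that vanishes on $\nu(P_L)$ and is positive on $\nu(P\setminus P_L)$. Hence $\conv(\nu(P_L))$ is a face of $\conv(\nu(P))$.
   Context: Combinatorial lines and $\mathrm{HJ}(d,n)$: for $\tau\in([d]\cup\{*\})^n\setminus[d]^n$ and $k\in\mathbb{R}$, $\sigma(\tau,k)$ is $\tau$ with every $*$ replaced by $k$; the combinatorial line is $L_\tau=\{\sigma(\tau,k):k\in[d]\}$, and $\mathrm{HJ}(d,n)$ is the hypergraph on $[d]^n$ whose hyperedges are all combinatorial lines. Choose vectors $v_1,\dots,v_n\in\mathbb{R}^2$, each with positive $x$-component, and for $\sigma\in\mathbb{R}^n$ set $p_\sigma=\sum_{i=1}^n\sigma_i v_i$; the $v_i$ are (after perturbation) such that the points $p_\sigma$, $\sigma\in[d]^n$, are distinct. Let $P=\{p_\sigma:\sigma\in[d]^n\}$. For a combinatorial line $L=L_\tau$, let $P_L=\{p_\sigma:\sigma\in L\}$ and let $S_L=\{p_{\sigma(\tau,t)}:t\in\mathbb{R}\}$ be the affine span of $P_L$, a line $y=a_Lx+b_L$ of finite slope. The $v_i$ are further assumed (after perturbation) to satisfy $S_L\cap P=P_L$ for every combinatorial line $L$. The map $\nu:\mathbb{R}^2\to\mathbb{R}^5$ is $\nu(x,y)=(x^2,xy,y^2,x,y)$. *)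

(* Defs.v *)
From HB Require Import structures.
From mathcomp Require Import all_boot all_order all_algebra.
Set Implicit Arguments. Unset Strict Implicit. Unset Printing Implicit Defensive.
Import Order.TTheory GRing.Theory Num.Theory.
Local Open Scope ring_scope.

Section Defs.
Variable R : realFieldType.

(* [d] = {1,...,d}; an element of [d]^n is s : {ffun 'I_n -> 'I_d}, where
   the ordinal j : 'I_d stands for the integer j+1.  Its real vector: *)
Definition word_vec (n d : nat) (s : {ffun 'I_n -> 'I_d}) : 'I_n -> R :=
  fun i => ((s i).+1)%:R.

(* tau in ([d] u {*})^n : None stands for the wildcard * *)
Definition is_comb_line (n d : nat) (tau : {ffun 'I_n -> option 'I_d}) : Prop :=
  exists i, tau i = None.

Definition sigma_tau (n d : nat) (tau : {ffun 'I_n -> option 'I_d}) (k : R)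
  : 'I_n -> R :=
  fun i => match tau i with Some j => (j.+1)%:R | None => k end.

Definition pt (n : nat) (v : 'I_n -> R * R) (sigma : 'I_n -> R) : R * R :=
  (\sum_(i < n) sigma i * (v i).1, \sum_(i < n) sigma i * (v i).2).

Definition Pset (n d : nat) (v : 'I_n -> R * R) (q : R * R) : Prop :=
  exists s : {ffun 'I_n -> 'I_d}, q = pt v (word_vec s).

Definition PL (n d : nat) (v : 'I_n -> R * R) (tau : {ffun 'I_n -> option 'I_d})
  (q : R * R) : Prop :=
  exists k : 'I_d, q = pt v (sigma_tau tau (k.+1)%:R).

Definition SL (n d : nat) (v : 'I_n -> R * R) (tau : {ffun 'I_n -> option 'I_d})
  (q : R * R) : Prop :=
  exists t : R, q = pt v (sigma_tau tau t).

Definition nu (q : R * R) : 'rV[R]_5 :=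
  \row_(i < 5) nth 0 [:: q.1 ^+ 2; q.1 * q.2; q.2 ^+ 2; q.1; q.2] i.

Definition affine_fun (g : 'rV[R]_5 -> R) : Prop :=
  exists (a : 'rV[R]_5) (c : R), forall z, g z = \sum_(i < 5) a 0 i * z 0 i + c.

Definition conv (A : 'rV[R]_5 -> Prop) (x : 'rV[R]_5) : Prop :=
  exists (m : nat) (w : 'I_m -> R) (z : 'I_m -> 'rV[R]_5),
    (forall i, 0 <= w i) /\ \sum_(i < m) w i = 1 /\ (forall i, A (z i)) /\
    x = \sum_(i < m) w i *: z i.

Definition is_convex (C : 'rV[R]_5 -> Prop) : Prop :=
  forall x y t, C x -> C y -> 0 <= t -> t <= 1 -> C (t *: x + (1 - t) *: y).

Definition is_face (F C : 'rV[R]_5 -> Prop) : Prop :=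
  (forall x, F x -> C x) /\ is_convex F /\
  forall x y t, C x -> C y -> 0 < t -> t < 1 ->
    F (t *: x + (1 - t) *: y) -> F x /\ F y.

Definition nu_img (A : R * R -> Prop) (z : 'rV[R]_5) : Prop :=
  exists q, A q /\ z = nu q.

End Defs.

(* Main.v *)
Require Import Defs.
From HB Require Import structures.
From mathcomp Require Import all_boot all_order all_algebra.
From mathcomp Require Import ring lra.
Import Order.TTheory GRing.Theory Num.Theory.
Local Open Scope ring_scope.

Section Aux.
Variable R : realFieldType.

Lemma split_l m n (i : 'I_m) : split (lshift n i) = inl i.
Proof. exact: (unsplitK (inl i)). Qed.
Lemma split_r m n (i : 'I_n) : split (rshift m i) = inr i.
Proof. exact: (unsplitK (inr i)). Qed.

Definition linf (a : 'rV[R]_5) (z : 'rV[R]_5) := \sum_(i<5) a 0 i * z 0 i.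

Lemma linf0 a : linf a 0 = 0.
Proof. by rewrite /linf big1 // => i _; rewrite mxE mulr0. Qed.

Lemma linfD a x y : linf a (x + y) = linf a x + linf a y.
Proof. by rewrite /linf -big_split; apply: eq_bigr => i _; rewrite mxE mulrDr. Qed.

Lemma linfZ a t x : linf a (t *: x) = t * linf a x.
Proof. by rewrite /linf mulr_sumr; apply: eq_bigr => i _; rewrite mxE mulrCA. Qed.

Lemma linf_sum a m (w : 'I_m -> R) z :
  linf a (\sum_(k < m) w k *: z k) = \sum_(k < m) w k * linf a (z k).
Proof.
elim/big_rec2: _ => [|i y1 y2 _ <-]; first by rewrite linf0.
by rewrite linfD linfZ.
Qed.

Lemma conv_mono (A B : 'rV[R]_5 -> Prop) : (forall x, A x -> B x) ->
  forall x, conv A x -> conv B x.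
Proof.
move=> AB x [m [w [z [w0 [w1 [zA ->]]]]]].
by exists m, w, z; split=> //; split=> //; split=> // i; apply: AB.
Qed.

Lemma conv_convex (A : 'rV[R]_5 -> Prop) : is_convex (conv A).
Proof.
move=> x y t [m [w [z [w0 [w1 [zA ->]]]]]] [m' [w' [z' [w0' [w1' [zA' ->]]]]]] t0 t1.
exists (m + m')%N,
  (fun k => match split k with inl i => t * w i | inr j => (1 - t) * w' j end),
  (fun k => match split k with inl i => z i | inr j => z' j end).
split; [|split; [|split]].
- move=> k; case: split => i; apply: mulr_ge0 => //; by rewrite subr_ge0.
- rewrite big_split_ord /=.
  rewrite (eq_bigr (fun i => t * w i)); last by move=> i _; rewrite split_l.
  rewrite (eq_bigr (fun i => (1-t) * w' i)); last by move=> i _; rewrite split_r.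
  by rewrite -!mulr_sumr w1 w1' !mulr1 addrC subrK.
- by move=> k; case: split.
- rewrite [RHS]big_split_ord /= !scaler_sumr.
  by congr (_ + _); apply: eq_bigr => i _; rewrite ?split_l ?split_r scalerA.
Qed.

Lemma affine_conv a c m (w : 'I_m -> R) z : \sum_(k < m) w k = 1 ->
  linf a (\sum_(k < m) w k *: z k) + c = \sum_(k < m) w k * (linf a (z k) + c).
Proof.
move=> w1; rewrite linf_sum.
under [RHS]eq_bigr do rewrite mulrDr.
by rewrite big_split /= -mulr_suml w1 mul1r.
Qed.

Lemma face_gen (A B : 'rV[R]_5 -> Prop) a c :
  (forall x, A x -> B x) ->
  (forall x, A x -> linf a x + c = 0) ->
  (forall x, B x -> 0 <= linf a x + c) ->
  (forall x, B x -> linf a x + c = 0 -> A x) ->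
  is_face (conv A) (conv B).
Proof.
move=> AB gA gB gBA.
have gconvB : forall x, conv B x -> 0 <= linf a x + c.
  move=> x [m [w [z [w0 [w1 [zA ->]]]]]]; rewrite affine_conv //.
  by apply: sumr_ge0 => i _; apply: mulr_ge0 => //; apply: gB.
have gconvA : forall x, conv A x -> linf a x + c = 0.
  move=> x [m [w [z [w0 [w1 [zA ->]]]]]]; rewrite affine_conv //.
  by rewrite big1 // => i _; rewrite gA // mulr0.
have key : forall x, conv B x -> linf a x + c = 0 -> conv A x.
  move=> x [m [w [z [w0 [w1 [zB ->]]]]]]; rewrite affine_conv // => hs.
  have hz := psumr_eq0P (fun i _ => mulr_ge0 (w0 i) (gB _ (zB i))) hs.
  have [i0 hi0] : exists i, w i != 0.
    apply/existsP; apply: contraT; rewrite negb_exists => /forallP H.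
    move: w1; rewrite big1 => [|i _]; last by apply/eqP; rewrite -[_ == _]negbK H.
    by move/eqP; rewrite eq_sym oner_eq0.
  have zi0 : A (z i0).
    apply: gBA; first exact: zB.
    by move: (hz i0 isT) => /eqP; rewrite mulf_eq0 (negbTE hi0) /= => /eqP.
  exists m, w, (fun i => if w i == 0 then z i0 else z i).
  split=> //; split=> //; split.
  + move=> i; case: eqP => // /eqP hi; apply: gBA; first exact: zB.
    by move: (hz i isT) => /eqP; rewrite mulf_eq0 (negbTE hi) /= => /eqP.
  + by apply: eq_bigr => i _; case: eqP => // ->; rewrite !scale0r.
split; first exact: conv_mono.
split; first exact: conv_convex.
move=> x y t cx cy t0 t1 hF.
have := gconvA _ hF.
rewrite linfD !linfZ.
have gx := gconvB _ cx; have gy := gconvB _ cy.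
move=> h.
have ex : linf a x + c = 0 by nra.
have ey : linf a y + c = 0 by nra.
by split; apply: key.
Qed.

End Aux.

Theorem lemma2p4 (R : realFieldType) (d n : nat) (v : 'I_n -> R * R)
  (hvx : forall i, 0 < (v i).1)
  (hdist : injective (fun s : {ffun 'I_n -> 'I_d} => pt v (word_vec R s)))
  (hline : forall tau : {ffun 'I_n -> option 'I_d}, is_comb_line tau ->
     forall q, (SL v tau q /\ Pset d v q) <-> PL v tau q)
  (tau : {ffun 'I_n -> option 'I_d}) (htau : is_comb_line tau) :
  (exists g : 'rV[R]_5 -> R, affine_fun g /\
     (forall q, PL v tau q -> g (nu q) = 0) /\
     (forall q, Pset d v q -> ~ PL v tau q -> 0 < g (nu q))) /\
  is_face (conv (nu_img (PL v tau))) (conv (nu_img (Pset d v))).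
Proof.
have [i0 hi0] := htau.
pose wx := \sum_(i < n) (if tau i is None then (v i).1 else 0).
pose wy := \sum_(i < n) (if tau i is None then (v i).2 else 0).
pose p0 := pt v (sigma_tau tau 0).
have ptline : forall t, pt v (sigma_tau tau t) = (p0.1 + t * wx, p0.2 + t * wy).
  move=> t; rewrite /p0 /pt /wx /wy; congr pair; rewrite mulr_sumr -big_split;
  apply: eq_bigr => i _; rewrite /sigma_tau; case: (tau i) => [j|] /=;
  by rewrite ?mulr0 ?addr0 ?mul0r ?add0r.
have wx0 : 0 < wx.
  rewrite /wx (bigD1 i0) //= hi0; apply: ltr_wpDr; last exact: hvx.
  by apply: sumr_ge0 => i _; case: (tau i) => //=; exact: ltW.
have wxn0 : wx != 0 by rewrite gt_eqF.
pose h (q : R * R) := (q.2 - p0.2) * wx - (q.1 - p0.1) * wy.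
pose A := wx. pose B := - wy. pose C := - p0.2 * wx + p0.1 * wy.
pose a : 'rV[R]_5 := \row_(i < 5) nth 0 [:: B ^+ 2; 2 * A * B; A ^+ 2; 2 * B * C; 2 * A * C] i.
pose c := C ^+ 2.
have gnu : forall q, linf R a (nu q) + c = h q ^+ 2.
  move=> q; rewrite /linf !big_ord_recl big_ord0 /= !mxE /= /c /h /A /B /C; ring.
have hPL : forall q, PL v tau q -> h q = 0.
  by move=> q [k ->]; rewrite ptline /h /=; ring.
have hP : forall q, Pset d v q -> h q = 0 -> PL v tau q.
  move=> [x y] Pq h0; apply: (hline tau htau _).1; split=> //.
  exists ((x - p0.1) / wx); rewrite ptline; congr pair.
    by rewrite mulfVK // addrC subrK.
  move: h0; rewrite /h /= => /eqP; rewrite subr_eq0 => /eqP E.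
  by rewrite mulrAC -E mulfK // addrC subrK.
split.
  exists (fun z => linf R a z + c); split; first by exists a, c.
  split; first by move=> q /hPL h0; rewrite gnu h0 expr0n.
  move=> q Pq nPL; rewrite gnu lt0r sqr_ge0 andbT sqrf_eq0.
  by apply/eqP => /(hP q Pq).
apply: (@face_gen R _ _ a c).
- by move=> z [q [hq ->]]; exists q; split=> //; exact: ((hline tau htau q).2 hq).2.
- by move=> z [q [hq ->]]; rewrite gnu hPL // expr0n.
- by move=> z [q [hq ->]]; rewrite gnu sqr_ge0.
- move=> z [q [hq ->]]; rewrite gnu => /eqP; rewrite sqrf_eq0 => /eqP h0.
  by exists q; split=> //; apply: hP.
Qed.
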